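(* Let $\mathfrak{G}$ be a topologically Noetherian profinite group. Then every minimal equicontinuous continuous action $\widehat{\Phi}\colon\mathfrak{G}\times\mathfrak{X}\to\mathfrak{X}$ of $\mathfrak{G}$ on a Cantor space $\mathfrak{X}$ is locally quasi-analytic.
   Context: A profinite group is topologically Noetherian if every increasing chain of closed subgroups has a maximal element. An action of a group $G$ by homeomorphisms on a metric Cantor space $\mathfrak{X}$ is locally quasi-analytic if there exists $\varepsilon>0$ such that for every nonempty open $U\subset\mathfrak{X}$ with $\mathrm{diam}(U)<\varepsilon$, every nonempty open $V\subset U$, and all $g_1,g_2\in G$: if the actions of $g_1$ and $g_2$ agree on $V$, then they agree on $U$. Minimal means every orbit is dense. *)

(* Defs.v *)
From HB Require Import structures.
From mathcomp Require Import all_boot all_order all_algebra.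
From mathcomp Require Import all_classical all_reals all_analysis.
Set Implicit Arguments. Unset Strict Implicit. Unset Printing Implicit Defensive.
Import Order.TTheory GRing.Theory Num.Theory.
Local Open Scope classical_set_scope.
Local Open Scope ring_scope.

Definition is_group (G : Type) (mul : G -> G -> G) (inv : G -> G) (e : G) :=
  [/\ associative mul, left_id e mul & left_inverse e inv mul].

Definition is_topological_group (G : topologicalType)
    (mul : G -> G -> G) (inv : G -> G) (e : G) :=
  [/\ is_group mul inv e,
      continuous (fun p : G * G => mul p.1 p.2) & continuous inv].

Definition profinite_group (G : topologicalType)
    (mul : G -> G -> G) (inv : G -> G) (e : G) :=
  [/\ is_topological_group mul inv e, compact [set: G],
      hausdorff_space G & totally_disconnected [set: G]].

Definition closed_subgroup (G : topologicalType)
    (mul : G -> G -> G) (inv : G -> G) (e : G) (H : set G) :=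
  [/\ closed H, H e & forall x y, H x -> H y -> H (mul x (inv y))].

Definition topologically_noetherian (G : topologicalType)
    (mul : G -> G -> G) (inv : G -> G) (e : G) :=
  forall H : nat -> set G,
    (forall n, closed_subgroup mul inv e (H n)) ->
    (forall n, H n `<=` H n.+1) ->
    exists n, forall m, H m `<=` H n.

Definition is_metric (R : realType) (X : Type) (d : X -> X -> R) :=
  [/\ forall x y, 0 <= d x y,
      forall x y, d x y = 0 <-> x = y,
      forall x y, d x y = d y x &
      forall x y z, d x z <= d x y + d y z].

Definition metric_compatible (R : realType) (X : topologicalType)
    (d : X -> X -> R) :=
  forall A : set X, open A <->
    (forall x, A x -> exists2 r, 0 < r & [set y | d x y < r] `<=` A).

Definition metric_cantor_space (R : realType) (X : topologicalType)
    (d : X -> X -> R) :=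
  [/\ is_metric d, metric_compatible d, cantor_like X & [set: X] !=set0].

Definition diam (R : realType) (X : Type) (d : X -> X -> R) (U : set X)
  : \bar R := ereal_sup [set (d p.1 p.2)%:E | p in U `*` U].

Definition group_action (G X : Type) (mul : G -> G -> G) (e : G)
    (act : G -> X -> X) :=
  (forall x, act e x = x) /\
  (forall g h x, act (mul g h) x = act g (act h x)).

Definition continuous_action (G X : topologicalType) (act : G -> X -> X) :=
  continuous (fun p : G * X => act p.1 p.2).

Definition minimal_action (G : Type) (X : topologicalType)
    (act : G -> X -> X) :=
  forall x : X, dense (range (fun g => act g x)).

Definition equicontinuous_action (R : realType) (G X : Type)
    (d : X -> X -> R) (act : G -> X -> X) :=
  forall eps, 0 < eps -> exists2 delta, 0 < delta &
    forall x y, d x y < delta -> forall g, d (act g x) (act g y) < eps.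

Definition locally_quasi_analytic (R : realType) (G : Type)
    (X : topologicalType) (d : X -> X -> R) (act : G -> X -> X) :=
  exists2 eps : R, 0 < eps &
    forall U : set X, open U -> U !=set0 -> (diam d U < eps%:E)%E ->
    forall V : set X, open V -> V !=set0 -> V `<=` U ->
    forall g1 g2 : G, (forall x, V x -> act g1 x = act g2 x) ->
      forall x, U x -> act g1 x = act g2 x.

(* Main.v *)
Require Import Defs.
From HB Require Import structures.
From mathcomp Require Import all_boot all_order all_algebra.
From mathcomp Require Import all_classical all_reals all_analysis.
Import Order.TTheory GRing.Theory Num.Theory.
Local Open Scope classical_set_scope.
Local Open Scope ring_scope.

Lemma grp_rinv (G : Type) (mul : G -> G -> G) (inv : G -> G) (e : G) :
  is_group mul inv e -> forall g, mul g (inv g) = e.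
Proof.
case=> mA m1 mV g.
rewrite -[mul g _]m1 -{1}(mV (inv g)) -mA (mA (inv g)) mV m1.
exact: mV.
Qed.

Lemma inv_lt_nat (R : realType) (d : R) : 0 < d ->
  exists m : nat, m.+1%:R^-1 < d.
Proof.
move=> d0; have di : 0 <= d^-1 by rewrite invr_ge0 ltW.
have hb := archi_boundP di.
exists (Num.Def.archi_bound d^-1).
rewrite invf_plt ?posrE //; apply: (lt_le_trans hb).
by rewrite ler_nat.
Qed.

Theorem proposition3p4 (R : realType) (G : topologicalType)
  (mul : G -> G -> G) (inv : G -> G) (e : G) :
  profinite_group mul inv e ->
  topologically_noetherian mul inv e ->
  forall (X : topologicalType) (d : X -> X -> R) (act : G -> X -> X),
    metric_cantor_space d ->
    group_action mul e act ->
    continuous_action act ->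
    minimal_action act ->
    equicontinuous_action d act ->
    locally_quasi_analytic d act.
Proof.
move=> [[grp cmul cinv] cptG hG tdG] noeth X d act
  [[d0 deq dsym dtri] dcomp [_ cptX hX _] [x0 _]] [ae amul] cact mini eqc.
have grp' := grp; case: grp' => mA m1 mV.
have rinv := @grp_rinv _ _ _ _ grp.
have fcont : forall x, continuous (fun g => act g x).
  move=> x g.
  apply: (@continuous2_cvg _ G X X (nbhs g) _ id (fun _ => x) act g x).
  - exact: (cact (g, x)).
  - exact: cvg_id.
  - exact: cvg_cst.
have trans : forall y, exists g, act g x0 = y.
  move=> y; apply: contrapT => ny.
  have cO : closed (range (fun g => act g x0)).
    apply: compact_closed => //.
    apply: continuous_compact => //.
    exact: continuous_subspaceT.
  have := mini x0 (~` range (fun g => act g x0)).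
  case.
  - by exists y => -[g _ gy]; apply: ny; exists g.
  - by rewrite openC.
  - by move=> z [nz oz].
pose K (A : set X) : set G := [set g | forall x, A x -> act g x = x].
have Ksub : forall A, closed_subgroup mul inv e (K A).
  move=> A; split.
  - have -> : K A = \bigcap_(x in A) ((fun g => act g x) @^-1` [set x]).
      by apply/seteqP; split => g /= H x Ax; apply: H.
    apply: closed_bigI => x _.
    move/continuous_closedP: (fcont x); apply.
    exact: accessible_closed_set1 (hausdorff_accessible hX) x.
  - by move=> x _; rewrite ae.
  - move=> a b Ka Kb x Ax.
    rewrite amul -{1}(Kb x Ax) -(amul (inv b)) mV ae; exact: Ka.
pose B (x : X) (r : R) := [set y | d x y < r].
pose H (n : nat) := K (B x0 n.+1%:R^-1).
have [N HN] : exists n, forall m, H m `<=` H n.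
  apply: noeth => [n|n g Hg x Bx]; first exact: Ksub; apply: Hg.
  rewrite /B /= in Bx *; apply: (lt_le_trans Bx).
  by rewrite lef_pV2 ?posrE // ler_nat.
have rho0 : 0 < (N.+1%:R^-1 : R) by rewrite invr_gt0.
have [del' del'0 Hdel'] := eqc _ rho0.
exists del' => // U oU U0 dU V oV [y Vy] VU g1 g2 agree u Uu.
have [r r0 Br] := (dcomp V).1 oV y Vy.
have [del del0 Hdel] := eqc _ r0.
have [m Hm] := @inv_lt_nat R del del0.
have [g gy] := trans y.
pose h := mul (inv g2) g1.
have hV : forall z, V z -> act h z = z.
  move=> z Vz; rewrite amul agree // -amul mV ae //.
pose k := mul (inv g) (mul h g).
have kHm : H m k.
  move=> z Bz; rewrite /k amul (amul h).
  have Vgz : V (act g z).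
    have Bz' : d x0 z < m.+1%:R^-1 := Bz.
    apply: Br; rewrite /= -gy; apply: Hdel.
    exact: (lt_trans Bz' Hm).
  by rewrite hV // -amul mV ae.
have kN := HN m k kHm.
pose w := act (inv g) u.
have dyu : d y u < del'.
  rewrite -lte_fin; apply: le_lt_trans dU.
  apply: ereal_sup_ubound; exists (y, u) => //; split => //; exact: VU.
have Bw : B x0 N.+1%:R^-1 w.
  have := Hdel' _ _ dyu (inv g).
  by rewrite -gy -amul mV ae.
have uw : act g w = u by rewrite /w -amul rinv ae.
have hu : act h u = u.
  rewrite -uw -amul.
  have -> : mul h g = mul g k by rewrite /k mA rinv m1.
  by rewrite amul kN.
have -> : g1 = mul g2 h by rewrite /h mA rinv m1.
by rewrite amul hu.
Qed.
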